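(* Let $n\ge1$ and $u,v\in V_n$. There exists a valid rectangular pattern of tiles in $\mathcal T'_n$ whose sequence of bottom labels is $\tau_n(v)$ and whose sequence of left labels is $\tau_n(u)$ if and only if $$(u,v)\in (V_n\setminus Z_n\times V_n\setminus Z_n)\cup(M_n\cap Z_n\times M_n\cap Z_n)\cup(M_n\setminus Z_n\times Z_n)\cup(Z_n\times M_n\setminus Z_n).$$
   Context: Write $\bar m=m+1$. $V_n=\{(v_0,v_1,v_2)\in\mathbb{Z}^3: 0\le v_0\le v_1\le 1,\ v_1\le v_2\le n+1\}$, elements written as words $v_0v_1v_2$. $Z_n=\{v_0v_1v_2\in V_n: v_0=0\}$, $M_n=\{v_0v_1v_2\in V_n:v_2\ge n\}$. A Wang tile is $t=(a,b,c,d)$ with $\mathrm{RIGHT}(t)=a$, $\mathrm{TOP}(t)=b$, $\mathrm{LEFT}(t)=c$, $\mathrm{BOTTOM}(t)=d$; $\hat t=(b,a,d,c)$, $\hat S=\{\hat t:t\in S\}$. Define (as (right, top, left, bottom)): $W_n=\{(11(i+1),11(j+1),11i,11j):1\le i,j\le n\}$; $B'_n=\{(00(i+1),111,00i,11n):0\le i\le n\}$; $G_n=\{(01(i+1),111,00i,11(n+1)):0\le i\le n\}$; $Y_n=\{(01(i+1),112,01i,11(n+1)):1\le i\le n\}$; $A_n=\{(00(i+1),112,01i,11n):1\le i\le n\}$; $J'_n=\{((0,k,l),(0,r,s),(0,s,r+n),(0,l,k+n)):(k,l),(r,s)\in\{(0,0),(0,1),(1,1)\}\}$. $\mathcal T'_n=W_n\cup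 B'_n\cup G_n\cup Y_n\cup A_n\cup\hat B'_n\cup\hat G_n\cup\hat Y_n\cup\hat A_n\cup J'_n$. A rectangular pattern is valid if adjacent tiles agree on their common edge; its bottom labels are the bottom labels of its bottom row read left to right, its left labels the left labels of its left column read bottom to top. $\tau_n:V_n\to V_n^*$ is $\tau_n(xyz)=(0,x-y+1,n)\cdot(11n)^{z-x-1}\cdot(11\bar n)^{n+1-z}$ if $x\ne z$, and $\tau_n(xyz)=(0,x-y+1,n+1)\cdot(11\bar n)^{n-z}$ if $x=z$ (concatenation of sequences; exponents denote repetition). *)

(* Defs.v *)
From mathcomp Require Import all_boot.
Set Implicit Arguments. Unset Strict Implicit. Unset Printing Implicit Defensive.

Definition label := (nat * nat * nat)%type.

Definition tile := (label * label * label * label)%type.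
Definition RIGHT (t : tile) : label := let: (a, _, _, _) := t in a.
Definition TOP (t : tile) : label := let: (_, b, _, _) := t in b.
Definition LEFT (t : tile) : label := let: (_, _, c, _) := t in c.
Definition BOTTOM (t : tile) : label := let: (_, _, _, d) := t in d.

Definition hat (t : tile) : tile := let: (a, b, c, d) := t in (b, a, d, c).
Definition hatset (S : tile -> Prop) (t : tile) : Prop := exists s, S s /\ t = hat s.

Definition inV (n : nat) (v : label) : bool :=
  let: (v0, v1, v2) := v in [&& v0 <= v1, v1 <= 1, v1 <= v2 & v2 <= n.+1].
Definition inZ (n : nat) (v : label) : bool :=
  let: (v0, _, _) := v in inV n v && (v0 == 0).
Definition inM (n : nat) (v : label) : bool :=
  let: (_, _, v2) := v in inV n v && (n <= v2).

Definition W_set (n : nat) (t : tile) : Prop :=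
  exists i j, [/\ 1 <= i <= n, 1 <= j <= n &
    t = ((1, 1, i.+1), (1, 1, j.+1), (1, 1, i), (1, 1, j))].
Definition B'_set (n : nat) (t : tile) : Prop :=
  exists i, i <= n /\ t = ((0, 0, i.+1), (1, 1, 1), (0, 0, i), (1, 1, n)).
Definition G_set (n : nat) (t : tile) : Prop :=
  exists i, i <= n /\ t = ((0, 1, i.+1), (1, 1, 1), (0, 0, i), (1, 1, n.+1)).
Definition Y_set (n : nat) (t : tile) : Prop :=
  exists i, 1 <= i <= n /\ t = ((0, 1, i.+1), (1, 1, 2), (0, 1, i), (1, 1, n.+1)).
Definition A_set (n : nat) (t : tile) : Prop :=
  exists i, 1 <= i <= n /\ t = ((0, 0, i.+1), (1, 1, 2), (0, 1, i), (1, 1, n)).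
(* (k,l),(r,s) range over {(0,0),(0,1),(1,1)}, i.e. k <= l <= 1, r <= s <= 1 *)
Definition J'_set (n : nat) (t : tile) : Prop :=
  exists k l r s, [/\ k <= l <= 1, r <= s <= 1 &
    t = ((0, k, l), (0, r, s), (0, s, r + n), (0, l, k + n))].

Definition T'_set (n : nat) (t : tile) : Prop :=
  W_set n t \/ B'_set n t \/ G_set n t \/ Y_set n t \/ A_set n t \/
  hatset (B'_set n) t \/ hatset (G_set n) t \/ hatset (Y_set n) t \/
  hatset (A_set n) t \/ J'_set n t.

(* A w x h rectangular pattern P : column i (0 = leftmost), row j (0 = bottom). *)
Definition valid_pattern (n w h : nat) (P : nat -> nat -> tile) : Prop :=
  forall i j, i < w -> j < h ->
    [/\ T'_set n (P i j),
        (i.+1 < w -> RIGHT (P i j) = LEFT (P i.+1 j)) &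
        (j.+1 < h -> TOP (P i j) = BOTTOM (P i j.+1))].

Definition bottom_labels (w : nat) (P : nat -> nat -> tile) : seq label :=
  [seq BOTTOM (P i 0) | i <- iota 0 w].
Definition left_labels (h : nat) (P : nat -> nat -> tile) : seq label :=
  [seq LEFT (P 0 j) | j <- iota 0 h].

(* tau_n; note x - y + 1 is written (x.+1 - y) to avoid truncation (x <= y). *)
Definition tau (n : nat) (v : label) : seq label :=
  let: (x, y, z) := v in
  if x != z then
    (0, x.+1 - y, n) :: nseq (z - x - 1) (1, 1, n) ++ nseq (n.+1 - z) (1, 1, n.+1)
  else
    (0, x.+1 - y, n.+1) :: nseq (n - z) (1, 1, n.+1).

(* Main.v *)
Require Import Defs.
From mathcomp Require Import all_boot zify.
Set Implicit Arguments. Unset Strict Implicit. Unset Printing Implicit Defensive.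

Definition d0 : label := (0,0,0).

Lemma tau_size n x y z : 0 < n -> inV n (x,y,z) -> size (tau n (x,y,z)) = n.+1 - x.
Proof.
rewrite /inV /tau => hn /and4P[h1 h2 h3 h4].
case: eqP => hx /=; rewrite ?size_cat !size_nseq; lia.
Qed.

Lemma tau_nth0 n x y z : inV n (x,y,z) -> nth d0 (tau n (x,y,z)) 0 = (0, x.+1 - y, n + (z - x == 0)).
Proof.
rewrite /inV /tau => /and4P[h1 h2 h3 h4]; case: eqP => hx /=.
  by rewrite hx subnn addn1.
have -> : (z - x == 0) = false by lia.
by rewrite addn0.
Qed.

Lemma tau_nthS n x y z i : inV n (x,y,z) -> 0 < i < n.+1 - x ->
  nth d0 (tau n (x,y,z)) i = (1, 1, n + (z - x <= i)).
Proof.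
rewrite /inV /tau => /and4P[h1 h2 h3 h4] /andP[hi1 hi2].
case: i hi1 hi2 => // i _ hi2.
case: eqP => hx /=.
  subst x. rewrite subnn nth_nseq; have -> : i < n - z by lia. by rewrite addn1.
  rewrite nth_cat size_nseq; case: ifP => hlt.
    rewrite nth_nseq hlt. have -> : (z - x <= i.+1) = false by lia. by rewrite addn0.
  rewrite nth_nseq; have -> : i - (z - x - 1) < n.+1 - z by lia.
  have -> : (z - x <= i.+1) by lia. by rewrite addn1.
Qed.

Definition is11 (l : label) : bool := l.1 == (1,1).

Ltac dT := let H := fresh in move=> H; rewrite /T'_set /W_set /B'_set /G_set /Y_set /A_set /hatset /J'_set in H; case: H => [[i [j [Hi Hj ->]]]|[[i [Hi ->]]|[[i [Hi ->]]|[[i [Hi ->]]|[[i [Hi ->]]|[[s [[i [Hi ->]] ->]]|[[s [[i [Hi ->]] ->]]|[[s [[i [Hi ->]] ->]]|[[s [[i [Hi ->]] ->]]|[k [l [r [s' [Hkl Hrs ->]]]]]]]]]]]]]].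

Ltac fin := rewrite /is11 /hat /= ?xpair_eqE /=; repeat (let H := fresh in move=> H; try (move/eqP: H; rewrite ?xpair_eqE /= => H)); try done; try (apply/eqP; rewrite ?xpair_eqE /=); lia.

Lemma T_hat n t : T'_set n t -> T'_set n (hat t).
Proof.
dT.
- left; exists j, i; split => //.
- do 5 right; left; by exists (((0, 0, i.+1), (1, 1, 1), (0, 0, i), (1, 1, n))); split=> //; exists i.
- do 6 right; left; by exists (((0, 1, i.+1), (1, 1, 1), (0, 0, i), (1, 1, n.+1))); split=> //; exists i.
- do 7 right; left; by exists (((0, 1, i.+1), (1, 1, 2), (0, 1, i), (1, 1, n.+1))); split=> //; exists i.
- do 8 right; left; by exists (((0, 0, i.+1), (1, 1, 2), (0, 1, i), (1, 1, n))); split=> //; exists i.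
- by do 1 right; left; exists i.
- by do 2 right; left; exists i.
- by do 3 right; left; exists i.
- by do 4 right; left; exists i.
- do 9 right. by exists r, s', k, l.
Qed.

Lemma T_up n t : T'_set n t -> is11 (BOTTOM t) -> is11 (TOP t).
Proof. dT; fin. Qed.
Lemma T_right n t : T'_set n t -> is11 (LEFT t) -> is11 (RIGHT t).
Proof. dT; fin. Qed.
Lemma T_W n t : T'_set n t -> is11 (LEFT t) -> is11 (BOTTOM t) ->
  exists m, [/\ BOTTOM t = (1,1,m), m <= n & TOP t = (1,1,m.+1)].
Proof. dT; try fin. move=> _ _; exists j; split => //; lia. Qed.
Lemma T_c1 n t : T'_set n t -> BOTTOM t = (0,1,n.+1) -> (RIGHT t).1 = (0,1).
Proof. dT; fin. Qed.
Lemma T_c2 n t : T'_set n t -> BOTTOM t = (1,1,n.+1) -> (RIGHT t).1 = (0,1).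
Proof. dT; fin. Qed.
Lemma T_c3 n t : T'_set n t -> (LEFT t).1 = (0,1) -> is11 (BOTTOM t) -> TOP t = (1,1,2).
Proof. dT; fin. Qed.

Lemma bl_nth w P s : bottom_labels w P = s -> w = size s /\ forall i, i < w -> BOTTOM (P i 0) = nth d0 s i.
Proof.
move<-; rewrite size_map size_iota; split=> // i hi.
by rewrite (nth_map 0) ?size_iota // nth_iota.
Qed.

Lemma ll_nth h P s : left_labels h P = s -> h = size s /\ forall j, j < h -> LEFT (P 0 j) = nth d0 s j.
Proof.
move<-; rewrite size_map size_iota; split=> // i hi.
by rewrite (nth_map 0) ?size_iota // nth_iota.
Qed.

Lemma up11 n w h P : valid_pattern n w h P -> (forall i, 0 < i < w -> is11 (BOTTOM (P i 0))) ->
  forall j i, j < h -> 0 < i < w -> is11 (BOTTOM (P i j)).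
Proof.
move=> HV H0; elim=> [|j IH] i hj hi; first exact: H0.
have /andP[_ hiw] := hi.
have [HT _ HU] := HV i j hiw (ltnW hj).
rewrite -(HU hj). apply: (T_up HT). apply: IH => //. exact: ltnW.
Qed.

Lemma right11 n w h P : valid_pattern n w h P -> (forall j, 0 < j < h -> is11 (LEFT (P 0 j))) ->
  forall i j, i < w -> 0 < j < h -> is11 (LEFT (P i j)).
Proof.
move=> HV H0; elim=> [|i IH] j hi hj; first exact: H0.
have /andP[_ hjh] := hj.
have [HT HR _] := HV i j (ltnW hi) hjh.
rewrite -(HR hi). apply: (T_right HT). apply: IH => //. exact: ltnW.
Qed.

Lemma climb n w h P i0 : valid_pattern n w h P ->
  (forall i, 0 < i < w -> is11 (BOTTOM (P i 0))) ->
  (forall j, 0 < j < h -> is11 (LEFT (P 0 j))) ->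
  0 < i0 < w -> TOP (P i0 0) = (1,1,2) ->
  forall j, 0 < j < h -> BOTTOM (P i0 j) = (1,1,j.+1).
Proof.
move=> HV Hb Hl hi0 Htop.
have hiw : i0 < w by case/andP: hi0.
elim=> [//|j IH] /andP[_ hj].
have [HT _ HU] := HV i0 j hiw (ltnW hj).
rewrite -(HU hj).
case: j IH hj HT HU => [|j] IH hj HT HU; first exact: Htop.
have IH' := IH (ltnW hj).
have [m [Hm1 Hm2 Hm3]] := T_W HT (right11 HV Hl (j:=j.+1) hiw ltac:(lia)) (up11 HV Hb (j:=j.+1) ltac:(lia) hi0).
by rewrite Hm3; rewrite IH' in Hm1; case: Hm1 => ->.
Qed.

Lemma no_pat n w h P x y z x' y' z' : 0 < n -> valid_pattern n w h P ->
  bottom_labels w P = tau n (x',y',z') -> left_labels h P = tau n (x,y,z) ->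
  inV n (x,y,z) -> inV n (x',y',z') -> x = 0 -> z' < n -> False.
Proof.
move=> hn HV HB HL hu hv hx hz.
have [Hw Hb] := bl_nth HB. have [Hh Hl] := ll_nth HL.
rewrite tau_size // in Hw. rewrite tau_size // in Hh.
move: (hv); rewrite /inV => /and4P[h1 h2 h3 h4].
have Hb11 : forall i, 0 < i < w -> is11 (BOTTOM (P i 0)).
  move=> i hi; rewrite Hb; last by case/andP: hi.
  by rewrite tau_nthS // -Hw.
have Hl11 : forall j, 0 < j < h -> is11 (LEFT (P 0 j)).
  move=> j hj; rewrite Hl; last by case/andP: hj.
  by rewrite tau_nthS // -Hh.
set e := z' - x'. have De : e = z' - x' by []. clearbody e.
have he : e.+1 < w by lia.
have [HT0 HR0 _] := HV e 0 (ltnW he) ltac:(lia).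
have HR : (RIGHT (P e 0)).1 = (0,1).
  case: (posnP e) => he0.
    apply: (T_c1 HT0). rewrite he0 Hb; last lia.
    rewrite tau_nth0 //. have -> : x'.+1 - y' = 1 by lia. by rewrite -De he0 addn1.
  apply: (T_c2 HT0). rewrite Hb; last lia.
  rewrite tau_nthS -?De ?leqnn ?addn1 //; lia.
have [HT1 _ _] := HV e.+1 0 he ltac:(lia).
have Htop : TOP (P e.+1 0) = (1,1,2).
  apply: (T_c3 HT1); first by rewrite -(HR0 he).
  apply: Hb11; lia.
have := @climb n w h P e.+1 HV Hb11 Hl11 ltac:(lia) Htop n ltac:(lia).
have [HTn _ _] := HV e.+1 n he ltac:(lia).
have [m [Hm1 Hm2 Hm3]] := T_W HTn (right11 HV Hl11 (j:=n) he ltac:(lia)) (up11 HV Hb11 (j:=n) (i:=e.+1) ltac:(lia) ltac:(lia)).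
rewrite Hm1; case=> hm; lia.
Qed.

Definition rowtile (s : seq label) (e l i : nat) : tile :=
  ((0, nat_of_bool (e < i.+1), l + i), (1,1,(nat_of_bool (e < i)).+1),
   (0, nat_of_bool (e < i), l + i.-1), nth d0 s i).

Lemma rowtile_T n x y z i : 0 < n -> inV n (x,y,z) -> 0 < i < n.+1 - x ->
  T'_set n (rowtile (tau n (x,y,z)) (z-x) (x.+1-y) i).
Proof.
move=> hn hv hi; rewrite /rowtile tau_nthS //.
move: (hv); rewrite /inV => /and4P[h1 h2 h3 h4].
case: i hi => [//|i] hi /=.
rewrite ltnS addnS.
case E1: (z - x < i.+1); case E2: (z - x <= i.+1) => /=.
- do 3 right; left; exists (x.+1 - y + i); split; first lia. by rewrite addn1.
- lia.
- do 2 right; left; exists (x.+1 - y + i); split; first lia. by rewrite addn1.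
- do 1 right; left; exists (x.+1 - y + i); split; first lia. by rewrite addn0.
Qed.

Definition Pc n x y z x' y' z' (i j : nat) : tile :=
  let tu := tau n (x,y,z) in let tv := tau n (x',y',z') in
  let ev := z' - x' in let lv := x'.+1 - y' in let eu := z - x in let lu := x.+1 - y in
  if i == 0 then
    (if j == 0 then ((0, nat_of_bool (ev < 1), lv), (0, nat_of_bool (eu < 1), lu), nth d0 tu 0, nth d0 tv 0)
     else hat (rowtile tu eu lu j))
  else if j == 0 then rowtile tv ev lv i
  else ((1,1,(eu < j) + i + 1), (1,1,(ev < i) + j + 1), (1,1,(eu < j) + i), (1,1,(ev < i) + j)).

Lemma construct n x y z x' y' z' : 0 < n -> inV n (x,y,z) -> inV n (x',y',z') ->
  (x = 0 -> n <= z') -> (x' = 0 -> n <= z) ->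
  valid_pattern n (n.+1 - x') (n.+1 - x) (Pc n x y z x' y' z').
Proof.
move=> hn hu hv c1 c2.
move: (hu); rewrite /inV => /and4P[h1 h2 h3 h4].
move: (hv); rewrite /inV => /and4P[h1' h2' h3' h4'].
move=> i j hi hj; rewrite /Pc; split.
- case: eqP => hi0; case: eqP => hj0.
  + do 9 right. exists (nat_of_bool (z' - x' < 1)), (x'.+1 - y'), (nat_of_bool (z - x < 1)), (x.+1 - y).
    rewrite !tau_nth0 //; split; try lia.
    rewrite !ltnS !leqn0 ![_ + n]addnC //.
  + apply: T_hat; apply: rowtile_T => //; lia.
  + apply: rowtile_T => //; lia.
  + left; exists ((z - x < j) + i), ((z' - x' < i) + j); split; try lia.
    by rewrite !addn1.
- move=> hi1 /=; case: eqP => hi0; case: eqP => hj0 /=; try subst i; try subst j.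
  + by rewrite /rowtile /= ?addn0 ?addn1 ?addnS.
  + by rewrite /rowtile /= ?addn0 ?addn1 ?addnS.
  + by rewrite /rowtile /= ?addn0 ?addn1 ?addnS.
  + by rewrite /rowtile /= ?addn0 ?addn1 ?addnS.
- move=> hj1 /=; case: eqP => hi0; case: eqP => hj0 /=; try subst i; try subst j.
  + by rewrite /rowtile /= ?addn0 ?addn1 ?addnS.
  + by rewrite /rowtile /= ?addn0 ?addn1 ?addnS.
  + by rewrite /rowtile /= ?addn0 ?addn1 ?addnS.
  + by rewrite /rowtile /= ?addn0 ?addn1 ?addnS.
Qed.

Lemma construct_labels n x y z x' y' z' : 0 < n -> inV n (x,y,z) -> inV n (x',y',z') ->
  bottom_labels (n.+1 - x') (Pc n x y z x' y' z') = tau n (x',y',z') /\ left_labels (n.+1 - x) (Pc n x y z x' y' z') = tau n (x,y,z).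
Proof.
move=> hn hu hv; split.
- rewrite /bottom_labels -(tau_size hn hv) -[RHS](mkseq_nth d0) /mkseq.
  by apply: eq_map => -[|i].
- rewrite /left_labels -(tau_size hn hu) -[RHS](mkseq_nth d0) /mkseq.
  by apply: eq_map => -[|j].
Qed.

Lemma BOTTOM_hat t : BOTTOM (hat t) = LEFT t. Proof. by case: t => [[[a b] c] d]. Qed.
Lemma LEFT_hat t : LEFT (hat t) = BOTTOM t. Proof. by case: t => [[[a b] c] d]. Qed.
Lemma RIGHT_hat t : RIGHT (hat t) = TOP t. Proof. by case: t => [[[a b] c] d]. Qed.
Lemma TOP_hat t : TOP (hat t) = RIGHT t. Proof. by case: t => [[[a b] c] d]. Qed.

Lemma transpose n w h P : valid_pattern n w h P -> valid_pattern n h w (fun i j => hat (P j i)).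
Proof.
move=> HV i j hi hj; have [HT HR HU] := HV j i hj hi; split.
- exact: T_hat.
- by move=> hi1; rewrite RIGHT_hat LEFT_hat; apply: HU.
- by move=> hj1; rewrite TOP_hat BOTTOM_hat; apply: HR.
Qed.

Theorem proposition5p8 (n : nat) (u v : label) :
  1 <= n -> inV n u -> inV n v ->
  ((exists (w h : nat) (P : nat -> nat -> tile),
      [/\ valid_pattern n w h P, bottom_labels w P = tau n v & left_labels h P = tau n u])
   <->
   [|| (~~ inZ n u && ~~ inZ n v),
       [&& inM n u, inZ n u, inM n v & inZ n v],
       [&& inM n u, ~~ inZ n u & inZ n v] |
       [&& inZ n u, inM n v & ~~ inZ n v]]).
Proof.
move=> hn hu hv.
case: u hu => [[x y] z] hu; case: v hv => [[x' y'] z'] hv.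
have -> : [|| (~~ inZ n (x,y,z) && ~~ inZ n (x',y',z')),
       [&& inM n (x,y,z), inZ n (x,y,z), inM n (x',y',z') & inZ n (x',y',z')],
       [&& inM n (x,y,z), ~~ inZ n (x,y,z) & inZ n (x',y',z')] |
       [&& inZ n (x,y,z), inM n (x',y',z') & ~~ inZ n (x',y',z')]]
   = ((x == 0) ==> (n <= z')) && ((x' == 0) ==> (n <= z)).
  rewrite /inZ /inM hu hv /=.
  by case: (x == 0); case: (x' == 0); case: (n <= z); case: (n <= z').
split.
- move=> [w [h [P [HV HB HL]]]].
  apply/andP; split; apply/implyP => /eqP hx.
  + case: (leqP n z') => // hz; exfalso; exact: (no_pat hn HV HB HL hu hv hx hz).
  + case: (leqP n z) => // hz; exfalso.
    have HB' : bottom_labels h (fun i j => hat (P j i)) = tau n (x,y,z).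
      rewrite -HL /bottom_labels /left_labels; apply: eq_map => j; exact: BOTTOM_hat.
    have HL' : left_labels w (fun i j => hat (P j i)) = tau n (x',y',z').
      rewrite -HB /bottom_labels /left_labels; apply: eq_map => j; exact: LEFT_hat.
    exact: (no_pat hn (transpose HV) HB' HL' hv hu hx hz).
- move=> /andP[/implyP c1 /implyP c2].
  have [HB HL] := construct_labels hn hu hv.
  exists (n.+1 - x'), (n.+1 - x), (Pc n x y z x' y' z'); split => //.
  apply: construct => // hx; [apply: c1 | apply: c2]; exact/eqP.
Qed.
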